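(* Let $p\in\mathbb{C}\setminus\{0\}$. The assignment $$\Delta(H)=H\otimes\mathbb{I}+\mathbb{I}\otimes H,\quad \Delta(E)=E\otimes\mathbb{I}+\mathbb{I}\otimes E,\quad \Delta(F)=p\,F\otimes\mathbb{I}+(1-p)\,\mathbb{I}\otimes F$$ extends to an algebra homomorphism from the oscillator algebra $osc$ to $osc\otimes osc$. Moreover, for all $\lambda_1,\lambda_2\in\mathbb{C}$ and all integers $0\le k\le N$, the vectors $w_{k,N}=\sum_{n=0}^N K_n(k,N)\,|\lambda_1,n\rangle\otimes|\lambda_2,N-n\rangle$ in $V_{\lambda_1}\otimes V_{\lambda_2}$ satisfy $\Delta(H)w_{k,N}=(\lambda_1+\lambda_2+2N)w_{k,N}$, $\Delta(E)w_{k,N}=w_{k,N+1}$ and $\Delta(F)w_{k,N}=-(N-k)\,w_{k,N-1}$ (with $w_{k,k-1}=0$); i.e. the $K_n(k,N)$ are the Clebsch–Gordan coefficients for this coproduct.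
   Context: The oscillator algebra $osc$ is generated by $H,E,F$ with relations $[H,E]=2E$, $[H,F]=-2F$, $[E,F]=1$. For $\lambda\in\mathbb{C}$, $V_\lambda$ is the $osc$-module with basis $\{|\lambda,n\rangle: n\ge 0\}$ and action $H|\lambda,n\rangle=(\lambda+2n)|\lambda,n\rangle$, $E|\lambda,n\rangle=|\lambda,n+1\rangle$, $F|\lambda,n\rangle=-n|\lambda,n-1\rangle$. The functions $K_n(k,N)$ (proportional to Krawtchouk polynomials) are $$K_n(k,N)=\binom{N}{n}\,{}_2F_1\!\left(\begin{matrix}-n,\ -k\\ -N\end{matrix}\;\Big|\;p^{-1}\right)=\binom{N}{n}\sum_{j=0}^{\min(n,k)}\frac{(-n)_j(-k)_j}{j!\,(-N)_j}p^{-j},$$ with $(a)_j=a(a+1)\cdots(a+j-1)$. *)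

(* Defs.v *)
From HB Require Import structures.
From mathcomp Require Import all_boot all_order all_algebra.
Set Implicit Arguments. Unset Strict Implicit. Unset Printing Implicit Defensive.
Import Order.TTheory GRing.Theory Num.Theory.
Local Open Scope ring_scope.

(* (h, e, f) in an algebra B satisfies the defining relations of osc:
   [h,e] = 2e, [h,f] = -2f, [e,f] = 1.  By the universal property of the
   algebra presented by generators H,E,F and these relations, an assignment
   H |-> h, E |-> e, F |-> f extends to an algebra homomorphism osc -> B
   iff osc_rel h e f holds. *)
Definition osc_rel (R : comNzRingType) (B : algType R) (h e f : B) : Prop :=
  [/\ h * e - e * h = e *+ 2,
      h * f - f * h = - (f *+ 2) &
      e * f - f * e = 1].

(* Two triples whose elements pairwise commute (the images of X (x) 1 and
   1 (x) Y in osc (x) osc). *)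
Definition commuting_triples (R : comNzRingType) (B : algType R)
  (h1 e1 f1 h2 e2 f2 : B) : Prop :=
  forall x y, x \in [:: h1; e1; f1] -> y \in [:: h2; e2; f2] -> x * y = y * x.

(* A vector of V_lambda is given by its coefficients c : nat -> C on the basis
   |lambda,n>; a vector of V_l1 (x) V_l2 by its coefficients c m n on the
   basis |l1,m> (x) |l2,n>. *)
Section Modules.
Variable C : numClosedFieldType.

(* Action on V_lambda, written on coefficient sequences:
   H|n> = (lambda+2n)|n>, E|n> = |n+1>, F|n> = -n|n-1>. *)
Definition actH (lam : C) (c : nat -> C) : nat -> C :=
  fun n => (lam + 2 * n%:R) * c n.
Definition actE (c : nat -> C) : nat -> C :=
  fun n => if n is n'.+1 then c n' else 0.
Definition actF (c : nat -> C) : nat -> C :=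
  fun n => - (n.+1)%:R * c n.+1.

(* X (x) 1 and 1 (x) X acting on V_l1 (x) V_l2. *)
Definition on1 (op : (nat -> C) -> nat -> C) (c : nat -> nat -> C) :
  nat -> nat -> C := fun m n => op (fun m' => c m' n) m.
Definition on2 (op : (nat -> C) -> nat -> C) (c : nat -> nat -> C) :
  nat -> nat -> C := fun m n => op (c m) n.

Definition DeltaH (l1 l2 : C) (c : nat -> nat -> C) : nat -> nat -> C :=
  fun m n => on1 (actH l1) c m n + on2 (actH l2) c m n.
Definition DeltaE (c : nat -> nat -> C) : nat -> nat -> C :=
  fun m n => on1 actE c m n + on2 actE c m n.
Definition DeltaF (p : C) (c : nat -> nat -> C) : nat -> nat -> C :=
  fun m n => p * on1 actF c m n + (1 - p) * on2 actF c m n.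

Definition poch (a : C) (j : nat) : C := \prod_(i < j) (a + i%:R).

(* K_n(k,N) = binom(N,n) 2F1(-n,-k;-N; 1/p) *)
Definition Kraw (p : C) (n k N : nat) : C :=
  'C(N, n)%:R *
  \sum_(j < (minn n k).+1)
     (poch (- n%:R) j * poch (- k%:R) j / (j`!%:R * poch (- N%:R) j))
       * p^-1 ^+ j.

Definition wvec (p : C) (k N : nat) : nat -> nat -> C :=
  fun m n => if m + n == N then Kraw p m k N else 0.

End Modules.

(* Main.v *)
Require Import Defs.
From HB Require Import structures.
From mathcomp Require Import all_boot all_order all_algebra ring zify.
Import Order.TTheory GRing.Theory Num.Theory.
Local Open Scope ring_scope.

Lemma binff (m n j : nat) : (j <= m + n)%N -> ('C(m+n, m) * m^_j = (m+n)^_j * 'C(m+n-j, n))%N.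
Proof.
move=> hj; case: (leqP j m) => hjm; last first.
  by rewrite ffact_small // (@bin_small (m+n-j) n) ?muln0 ?mul0n //; lia.
apply/eqP; rewrite -(eqn_pmul2r (fact_gt0 (m-j))) -(eqn_pmul2r (fact_gt0 n)); apply/eqP.
have h1 := ffact_fact hjm.
have h2 : ('C(m+n,m) * (m`! * n`!) = (m+n)`!)%N by rewrite -(@bin_fact (m+n) m) ?leq_addr // addKn.
have h3 : ('C(m+n-j,n) * (n`! * (m-j)`!) = (m+n-j)`!)%N.
  have e : (m - j = m + n - j - n)%N by lia.
  by rewrite e bin_fact //; lia.
have h4 := ffact_fact hj.
transitivity ((m+n)`!).
  by rewrite -h2 -h1; ring.
by rewrite -h4 -h3; ring.
Qed.

Section S.
Variable C : numClosedFieldType.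
Variable p : C.
Hypothesis hp : p != 0.

Lemma poch_neg (a j : nat) : poch (- (a%:R : C)) j = (-1)^+j * (a ^_ j)%:R.
Proof.
elim: j => [|j IH]; first by rewrite /poch big_ord0 expr0 ffactn0 mulr1.
rewrite /poch big_ord_recr /= -/(poch _ j) IH ffactnSr exprS.
case: (leqP j a) => hja.
  have -> : ((a^_j * (a-j))%:R : C) = (a^_j)%:R * (a%:R - j%:R) by rewrite natrM natrB.
  move: ((-1) ^+ j : C) ((a ^_ j)%:R : C) => u v.
  ring.
by rewrite ffact_small // !mulr0 mul0r.
Qed.

Definition Q k a b : C :=
  \sum_(j < k.+1) 'C(k,j)%:R * (- p^-1)^+j * 'C(a+b-j, b)%:R.

Lemma KQ k m n : (k <= m + n)%N -> Kraw p m k (m+n) = Q k m n.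
Proof.
move=> hk.
have term : forall j : nat, (j <= k)%N ->
  'C(m+n, m)%:R * (poch (- m%:R) j * poch (- k%:R) j / (j`!%:R * poch (- (m+n)%:R) j) * p^-1 ^+ j)
  = 'C(k,j)%:R * (- p^-1)^+j * 'C(m+n-j, n)%:R :> C.
  move=> j hj.
  rewrite !poch_neg -(bin_ffact k j).
  have e : ('C(m+n,m)%:R * (m^_j)%:R = ((m+n)^_j)%:R * ('C(m+n-j,n))%:R :> C).
    by rewrite -!natrM binff //; apply: leq_trans hk.
  have n1 : (j`!%:R : C) != 0 by rewrite pnatr_eq0 -lt0n fact_gt0.
  have n2 : (((m+n)^_j)%:R : C) != 0 by rewrite pnatr_eq0 -lt0n ffact_gt0; apply: leq_trans hk.
  have n3 : ((-1)^+j : C) != 0 by rewrite expf_neq0 // oppr_eq0 oner_eq0.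
  rewrite -[- p^-1]mulN1r exprMn natrM.
  transitivity (('C(m+n,m)%:R * (m^_j)%:R) * ((-1) ^+ j * ((-1) ^+ j * ('C(k, j)%:R * j`!%:R)) /
     (j`!%:R * ((-1) ^+ j * ((m + n) ^_ j)%:R)) * p^-1 ^+ j) :> C).
    by ring.
  rewrite e; field.
  by rewrite n1 n2 n3.
rewrite /Kraw /Q mulr_sumr.
rewrite (big_ord_widen k.+1 (fun j : nat => 'C(m+n, m)%:R * (poch (- m%:R) j * poch (- k%:R) j / (j`!%:R * poch (- (m+n)%:R) j) * p^-1 ^+ j))); last by rewrite ltnS geq_minr.
rewrite big_mkcond /=; apply: eq_bigr => j _.
rewrite -term; last by rewrite -ltnS.
case: ifP => // hj.
have hmj : (m < j)%N.
  by have := ltn_ord j; move: hj; lia.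
by rewrite poch_neg ffact_small // !mulr0 !mul0r mulr0.
Qed.


Lemma QE1 k m n : (k <= (m + n).+1)%N -> Q k m n.+1 + Q k m.+1 n = Q k m.+1 n.+1.
Proof.
move=> hk; rewrite /Q -big_split; apply: eq_bigr => j _ /=.
have hj : (j <= k)%N by rewrite -ltnS.
rewrite -mulrDr -natrD.
have e1 : (m.+1 + n.+1 - j = (m + n.+1 - j).+1)%N by lia.
have e2 : (m.+1 + n - j = m + n.+1 - j)%N by lia.
by rewrite e1 e2 [('C(_.+1, _))%N]binS addnC.
Qed.

Lemma QE2 k N : (k <= N)%N -> Q k 0 N.+1 = Q k 0 N.
Proof.
move=> hk; rewrite /Q; apply: eq_bigr => j _; rewrite !add0n.
have := ltn_ord j.
case: (posnP j) => hj.
  by rewrite hj !subn0 !binn.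
by move=> hjk; rewrite (@bin_small (N.+1 - j)) 1?(@bin_small (N - j)) //; lia.
Qed.

Lemma QE3 k m : Q k m.+1 0 = Q k m 0.
Proof. by rewrite /Q; apply: eq_bigr => j _; rewrite !bin0. Qed.


Lemma QF k m n : (k <= (m + n).+1)%N ->
  p * (m.+1)%:R * Q k m.+1 n + (1 - p) * (n.+1)%:R * Q k m n.+1
  = ((m + n).+1 - k)%:R * Q k m n.
Proof.
move=> hk.
have hpq : p * p^-1 = 1 by rewrite mulfV.
pose f := fun i : nat => k%:R * 'C(k.-1, i)%:R * (- p^-1)^+i * 'C(m+n-i, n)%:R : C.
pose g := fun i : nat => p * i%:R * 'C(k,i)%:R * (- p^-1)^+i * 'C((m+n).+1-i, n)%:R : C.
apply/eqP; rewrite -subr_eq0; apply/eqP.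
transitivity (\sum_(j < k.+1) (f j + g j)).
  rewrite /Q !mulr_sumr -big_split /= -sumrB; apply: eq_bigr => j _.
  have hj : (j <= k)%N by rewrite -ltnS.
  rewrite /f /g addSn addnS.
  set r := ((m + n).+1 - j)%N.
  have er : (r.-1 = m + n - j)%N by rewrite /r; lia.
  have hA : (m.+1 * 'C(r, n) = r * 'C(m + n - j, n) + j * 'C(r, n))%N.
    case: (leqP n r) => h.
      rewrite -er mul_bin_down -mulnDl; congr (_ * _)%N; rewrite /r; lia.
    by rewrite (@bin_small r) // (@bin_small (m + n - j)) ?muln0 //; rewrite /r in h; lia.
  have hB : (n.+1 * 'C(r, n.+1) = r * 'C(m + n - j, n))%N by rewrite -er mul_bin_diag.
  have hC : (k * 'C(k.-1, j) = (k - j) * 'C(k, j))%N by rewrite mul_bin_down.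
  have hA' := congr1 (fun x : nat => x%:R : C) hA; rewrite /= natrD !natrM in hA'.
  have hB' := congr1 (fun x : nat => x%:R : C) hB; rewrite /= !natrM in hB'.
  have hC' := congr1 (fun x : nat => x%:R : C) hC; rewrite /= !natrM natrB // in hC'.
  have er' : (r%:R : C) = (m + n).+1%:R - j%:R by rewrite natrB // ?/r; lia.
  rewrite er' in hA' hB'.
  rewrite natrB //.
  set X := ('C(r, n)%:R : C); set Y := ('C(m + n - j, n)%:R : C).
  set Z := ('C(r, n.+1)%:R : C); set W := ('C(k.-1, j)%:R : C).
  set K := ('C(k, j)%:R : C); set u := (- p^-1)^+j.
  apply/eqP; rewrite -subr_eq0; apply/eqP.
  transitivity (p * K * u * (m.+1%:R * X - ((m + n).+1%:R - j%:R) * Y - j%:R * X)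
    + (1 - p) * K * u * (n.+1%:R * Z - ((m + n).+1%:R - j%:R) * Y)
    - u * Y * (k%:R * W - (k%:R - j%:R) * K)).
    by ring.
  by rewrite hA' hB' hC'; ring.
rewrite big_split /= [X in X + _ = _]big_ord_recr [X in _ + X = _]big_ord_recl /=.
have hfk : f k = 0.
  rewrite /f; case: k {hk f g} => [|k]; first by rewrite !mul0r.
  by rewrite bin_small // mulr0 !mul0r.
have hg0 : g 0%N = 0 by rewrite /g mulr0 !mul0r.
rewrite hfk hg0 addr0 add0r -big_split big1 // => i _ /=.
rewrite /bump add1n.
rewrite /f /g subSS exprS.
have hD := congr1 (fun x : nat => x%:R : C) (mul_bin_diag k i); rewrite /= !natrM in hD.
transitivity ((- p^-1) ^+ i * 'C(m + n - i, n)%:R *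
   (k%:R * 'C(k.-1, i)%:R - (p * p^-1) * (i.+1%:R * 'C(k, i.+1)%:R))).
  by ring.
by rewrite hD hpq mul1r subrr mulr0.
Qed.

End S.

Section Alg.
Variable R : comNzRingType.
Variable B : algType R.
Definition cm (x y : B) := x * y - y * x.
Lemma cmDl (a b c : B) : cm (a + b) c = cm a c + cm b c.
Proof. by rewrite /cm mulrDl mulrDr opprD addrACA. Qed.
Lemma cmDr (a b c : B) : cm a (b + c) = cm a b + cm a c.
Proof. by rewrite /cm mulrDl mulrDr opprD addrACA. Qed.
Lemma cmZr (a c : B) (s : R) : cm a (s *: c) = s *: cm a c.
Proof. by rewrite /cm -scalerAr -scalerAl scalerBr. Qed.
Lemma cm0 (a c : B) : a * c = c * a -> cm a c = 0.
Proof. by rewrite /cm => ->; rewrite subrr. Qed.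
End Alg.
Arguments cm {R B} x y.
Arguments Q {C} p k a b.

Theorem mainTheorem2 (C : numClosedFieldType) (p : C) (hp : p != 0) :
  (forall (B : algType C) (h1 e1 f1 h2 e2 f2 : B),
      osc_rel h1 e1 f1 -> osc_rel h2 e2 f2 ->
      commuting_triples h1 e1 f1 h2 e2 f2 ->
      osc_rel (h1 + h2) (e1 + e2) (p *: f1 + (1 - p) *: f2))
  /\
  (forall (l1 l2 : C) (k N : nat), (k <= N)%N ->
     (forall m n, DeltaH l1 l2 (wvec p k N) m n
                  = (l1 + l2 + 2 * N%:R) * wvec p k N m n)
     /\ (forall m n, DeltaE (wvec p k N) m n = wvec p k N.+1 m n)
     /\ (forall m n, DeltaF p (wvec p k N) m n
                  = - (N - k)%:R * (if (k < N)%N then wvec p k N.-1 m n else 0))).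
Proof.
split.
  move=> B h1 e1 f1 h2 e2 f2 [H1 H2 H3] [G1 G2 G3] cmt.
  have c : forall x y, x \in [:: h1; e1; f1] -> y \in [:: h2; e2; f2] -> cm x y = 0.
    by move=> x y hx hy; apply: cm0; apply: cmt.
  have c' : forall x y, x \in [:: h1; e1; f1] -> y \in [:: h2; e2; f2] -> cm y x = 0.
    by move=> x y hx hy; apply: cm0; symmetry; apply: cmt.
  have i1 : h1 \in [:: h1; e1; f1] by rewrite !inE eqxx.
  have i2 : e1 \in [:: h1; e1; f1] by rewrite !inE eqxx ?orbT.
  have i3 : f1 \in [:: h1; e1; f1] by rewrite !inE eqxx ?orbT.
  have j1 : h2 \in [:: h2; e2; f2] by rewrite !inE eqxx.
  have j2 : e2 \in [:: h2; e2; f2] by rewrite !inE eqxx ?orbT.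
  have j3 : f2 \in [:: h2; e2; f2] by rewrite !inE eqxx ?orbT.
  have H1' : cm h1 e1 = e1 *+ 2 := H1. have G1' : cm h2 e2 = e2 *+ 2 := G1.
  have H2' : cm h1 f1 = - (f1 *+ 2) := H2. have G2' : cm h2 f2 = - (f2 *+ 2) := G2.
  have H3' : cm e1 f1 = 1 := H3. have G3' : cm e2 f2 = 1 := G3.
  split.
  - change (cm (h1 + h2) (e1 + e2) = (e1 + e2) *+ 2).
    rewrite cmDl !cmDr.
    by rewrite H1' G1' (c h1 e2) // (c' e1 h2) // addr0 add0r mulrnDl.
  - change (cm (h1 + h2) (p *: f1 + (1 - p) *: f2) = - ((p *: f1 + (1 - p) *: f2) *+ 2)).
    rewrite cmDl !cmDr !cmZr.
    rewrite H2' G2' (c h1 f2) // (c' f1 h2) // !scaler0 addr0 add0r.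
    by rewrite !scalerN mulrnDl opprD !scalerMnr.
  - change (cm (e1 + e2) (p *: f1 + (1 - p) *: f2) = 1).
    rewrite cmDl !cmDr !cmZr.
    rewrite H3' G3' (c e1 f2) // (c' f1 e2) // !scaler0 addr0 add0r.
    by rewrite -scalerDl addrC subrK scale1r.
move=> l1 l2 k N hk.
have KQ' : forall m n M, (m + n)%N = M -> (k <= M)%N -> Kraw p m k M = Q p k m n.
  by move=> m n M <- h; apply: KQ.
have add_nat : forall a b : nat, (a + b)%R = (a + b)%N := fun _ _ => erefl.
split; [|split].
- move=> m n; rewrite /DeltaH /on1 /on2 /actH /wvec /=.
  case: eqP => [e|_]; last by rewrite !mulr0 addr0.
  by rewrite -e natrD; ring.
- move=> m n; rewrite /DeltaE /on1 /on2 /actE /wvec !add_nat.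
  case: m => [|m]; case: n => [|n] /=.
  + by rewrite addr0.
  + rewrite add0r; case: eqP => e; case: eqP => e' //; try (exfalso; move: e e'; lia).
    rewrite (KQ' 0%N n N) 1?(KQ' 0%N n.+1 N.+1); try (move: hk e; lia).
    by rewrite QE2 //; move: hk e; lia.
  + rewrite addr0; case: eqP => e; case: eqP => e' //; try (exfalso; move: e e'; lia).
    rewrite (KQ' m 0%N N) 1?(KQ' m.+1 0%N N.+1); try (move: hk e; lia).
    by rewrite QE3.
  + case: eqP => e; case: eqP => e'; case: eqP => e'' //; try (exfalso; move: e e' e''; lia).
      2: by rewrite addr0.
    rewrite (KQ' m n.+1 N) 1?(KQ' m.+1 n N) 1?(KQ' m.+1 n.+1 N.+1); try (move: hk e; lia).
    by rewrite QE1 //; move: hk e; lia.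
- move=> m n; rewrite /DeltaF /on1 /on2 /actF /wvec !add_nat.
  rewrite addSn addnS.
  case: (eqVneq (m + n).+1 N) => e.
    subst N; rewrite eqxx /=.
    rewrite (KQ' m.+1 n (m+n).+1) ?addSn // (KQ' m n.+1 (m+n).+1) ?addnS //.
    transitivity (-(p * (m.+1)%:R * Q p k m.+1 n + (1 - p) * (n.+1)%:R * Q p k m n.+1)).
      by ring.
    rewrite QF //.
    case: ifP => hkN.
      rewrite (KQ' m n (m+n)%N) //.
      by ring.
    have -> : ((m + n).+1 - k = 0)%N by lia.
    by rewrite !mul0r oppr0 mulr0.
  rewrite !mulr0 addr0.
  case: ifP => hkN; last by rewrite mulr0.
  have -> : (m + n == N.-1) = false.
    by apply/eqP => h; move: e hkN h; lia.
  by rewrite mulr0.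
Qed.
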